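(* Let $G=(V,E)$ be a finite graph with $n=|V|\ge 1$. Let $\mathrm{PCE}(G)$ be the minimum size of an edge set $S\subseteq E$ such that $(V,E\setminus S)$ admits a perfect code. Then $$\mathrm{PCE}(G)\le(\mathrm{mac}(G)-1)\,n\le 2\,\mathrm{PCE}(G).$$
   Context: A dominating set of $G$ is a set $D\subseteq V$ with $N[D]=V$, where $N[v]$ is the closed neighborhood. A perfect code is a dominating set $D$ with $|N[v]\cap D|=1$ for all $v\in V$ (deleting all edges always yields a graph with a perfect code, namely $V$, so $\mathrm{PCE}(G)$ is well defined). The average congestion of $S\subseteq V$ is $\overline{\mathrm{cong}}(S)=\frac{1}{|V|}\sum_{v\in V}|N[v]\cap S|$, and $\mathrm{mac}(G)$ is the minimum of $\overline{\mathrm{cong}}(D)$ over all dominating sets $D$ of $G$. *)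

(* Defs.v *)
(* A finite simple graph on a finType T is given by a
   symmetric irreflexive adjacency relation e : rel T. *)
From mathcomp Require Import all_boot all_order all_algebra.
Set Implicit Arguments. Unset Strict Implicit. Unset Printing Implicit Defensive.
Import Order.TTheory GRing.Theory Num.Theory.

Section Graphs.
Variable T : finType.

Definition cnbhd (a : rel T) (v : T) : {set T} := [set u | (u == v) || a v u].

Definition cnbhd_set (a : rel T) (D : {set T}) : {set T} :=
  \bigcup_(d in D) cnbhd a d.

Definition dominating (a : rel T) (D : {set T}) : bool :=
  cnbhd_set a D == [set: T].

Definition perfect_code (a : rel T) (D : {set T}) : bool :=
  dominating a D && [forall v, #|cnbhd a v :&: D| == 1%N].

Definition edges (e : rel T) : {set {set T}} :=
  [set [set p.1; p.2] | p in [pred p : T * T | e p.1 p.2]].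

Definition del_edges (e : rel T) (S : {set {set T}}) : rel T :=
  fun x y => e x y && ([set x; y] \notin S).

(* PCE(G): minimum |S| over S ⊆ E such that (V, E \ S) has a perfect code
   (S = E always qualifies, so #|E| is an attained default). *)
Definition PCE (e : rel T) : nat :=
  \big[minn/#|edges e|]_(S : {set {set T}} |
        (S \subset edges e) && [exists D : {set T}, perfect_code (del_edges e S) D])
     #|S|.

Definition avg_cong (a : rel T) (S : {set T}) : rat :=
  ((\sum_(v : T) #|cnbhd a v :&: S|)%:R / #|T|%:R)%R.

(* mac(G): minimum average congestion over dominating sets
   (the whole vertex set is dominating, so it is an attained default). *)
Definition mac (a : rel T) : rat :=
  \big[Order.min/avg_cong a [set: T]]_(D : {set T} | dominating a D) avg_cong a D.

End Graphs.

(* Main.v *)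
Require Import Defs.
From mathcomp Require Import all_boot all_order all_algebra.
Import Order.TTheory GRing.Theory Num.Theory.

Lemma bigminn_le (I : finType) (x : nat) (P : pred I) (F : I -> nat) j :
  P j -> (\big[minn/x]_(i | P i) F i <= F j)%N.
Proof.
move=> Pj; rewrite unlock.
have : j \in index_enum I by rewrite mem_index_enum.
elim: (index_enum I) => //= a s IH; rewrite inE => /orP [/eqP <-|js].
  by rewrite Pj geq_minl.
case: (P a); last exact: IH.
by apply: leq_trans (geq_minr _ _) (IH js).
Qed.

Section Work.
Variable T : finType.
Variable e : rel T.
Hypothesis e_sym : symmetric e.
Hypothesis e_irr : irreflexive e.

Definition csum (a : rel T) (D : {set T}) : nat := \sum_(v : T) #|cnbhd a v :&: D|.

Lemma card_pairs (Q : T -> T -> bool) :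
  #|[set p : T * T | Q p.1 p.2]| = \sum_(v : T) #|[set d | Q v d]|.
Proof.
rewrite -sum1dep_card big_mkcond /=.
rewrite (eq_bigr (fun v => \sum_d (Q v d : nat))); last first.
  by move=> v _; rewrite -sum1dep_card big_mkcond.
rewrite pair_big /=.
by apply: eq_bigr => p _; case: (Q _ _).
Qed.

Lemma set2_inj (v : T) : injective (fun d : T => [set v; d]).
Proof.
move=> d d' H.
have : d \in [set v; d'] by rewrite -H !inE eqxx orbT.
rewrite !inE => /orP [/eqP Hd|/eqP //].
subst d.
have : d' \in [set v; v] by rewrite H !inE eqxx orbT.
by rewrite !inE orbb => /eqP.
Qed.

Lemma del_sym S : symmetric (del_edges e S).
Proof. by move=> x y; rewrite /del_edges e_sym setUC. Qed.

Lemma part2 (S : {set {set T}}) (D : {set T}) :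
  S \subset edges e -> perfect_code (del_edges e S) D ->
  dominating e D /\ (csum e D <= #|T| + 2 * #|S|)%N.
Proof.
move=> SE /andP [Hdom /forallP Hpc].
split.
  rewrite /dominating eqEsubset subsetT /=.
  apply/subsetP => v _.
  move: Hdom; rewrite /dominating => /eqP Hd.
  have : v \in cnbhd_set (del_edges e S) D by rewrite Hd inE.
  case/bigcupP => d dD; rewrite !inE => Hv.
  apply/bigcupP; exists d => //; rewrite !inE.
  by case/orP: Hv => [->//|/andP [-> _]]; rewrite orbT.
pose Sv v := [set s in S | v \in s].
have step1 : forall v, (#|cnbhd e v :&: D| <= 1 + #|Sv v|)%N.
  move=> v.
  have sub : cnbhd e v :&: D \subset (cnbhd (del_edges e S) v :&: D) :|: [set d | [set v; d] \in S].
    apply/subsetP => d; rewrite !inE => /andP [H dD].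
    rewrite dD /=.
    case: (boolP ([set v; d] \in S)) => HS; first by rewrite orbT.
    rewrite orbF; case/orP: H => [->//|H]; by rewrite /del_edges H HS orbT.
  apply: (leq_trans (subset_leq_card sub)).
  apply: (leq_trans (leq_card_setU _ _)).
  rewrite (eqP (Hpc v)) leq_add2l.
  rewrite -(card_imset _ (@set2_inj v)).
  apply: subset_leq_card; apply/subsetP => s /imsetP [d]; rewrite !inE => Hd ->.
  by rewrite Hd !inE eqxx.
rewrite /csum; apply: (@leq_trans (\sum_(v : T) (1 + #|Sv v|))); first exact: leq_sum (fun v _ => step1 v).
rewrite big_split /= sum1_card leq_add2l.
have -> : \sum_(v : T) #|Sv v| = \sum_(s in S) #|s|.
  rewrite (eq_bigr (fun v => \sum_(s in S) (v \in s : nat))); last first.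
    move=> v _; rewrite -sum1_card big_mkcond /= [RHS]big_mkcond /=.
    by apply: eq_bigr => s _; rewrite !inE; case: (s \in S); case: (v \in s).
  rewrite exchange_big /=; apply: eq_bigr => s _.
  by rewrite -sum1_card [RHS]big_mkcond /=; apply: eq_bigr => i _; case: (i \in s).
rewrite mulnC -sum_nat_const; apply: leq_sum => s sS.
move/subsetP: SE => /(_ s sS) /imsetP [p _ ->].
by rewrite cards2; case: (_ != _).
Qed.


Lemma part1 (D : {set T}) : dominating e D ->
  exists S : {set {set T}}, [/\ S \subset edges e,
     perfect_code (del_edges e S) D & (#|S| + #|T| <= csum e D)%N].
Proof.
move=> /eqP Hd.
pose f v := if v \in D then v else odflt v [pick d in D | e v d].
have fP : forall v, (f v \in D) /\ (v \notin D -> e v (f v)).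
  move=> v; rewrite /f; case: ifP => vD; first by rewrite vD.
  have : v \in cnbhd_set e D by rewrite Hd inE.
  case/bigcupP => d dD; rewrite !inE => /orP [/eqP Hv|Hdv].
    by rewrite Hv dD in vD.
  case: pickP => [x /andP [xD Hx] | H]; first by rewrite xD.
  by move: (H d); rewrite dD e_sym Hdv.
have fD : forall v, v \in D -> f v = v by move=> v vD; rewrite /f vD.
pose Q := [set p : T * T | (p.2 \in D) && e p.1 p.2 && (p.2 != f p.1)].
pose S := [set [set p.1; p.2] | p in Q].
have key : forall v, cnbhd (del_edges e S) v :&: D = [set f v].
  move=> v; apply/setP => d; rewrite !inE.
  apply/idP/idP.
    case/andP => /orP [/eqP -> vD|/andP [Hvd HS] dD].
      by rewrite fD.
    apply/negPn/negP => Hne; move/negP: HS; apply.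
    by apply/imsetP; exists (v, d) => //; rewrite inE /= dD Hvd Hne.
  move/eqP ->; case: (fP v) => -> Hf; rewrite andbT.
  case: (boolP (v \in D)) => vD; first by rewrite fD // eqxx.
  rewrite /del_edges (Hf vD) /= orbC; apply/orP; left.
  apply/imsetP => [[[x y]]]; rewrite inE /= => /andP [/andP [yD Hxy] Hyf] Heq.
  have yv : y != v by apply: contraNneq vD => <-.
  have : y \in [set v; f v] by rewrite Heq !inE eqxx orbT.
  rewrite !inE (negbTE yv) /= => /eqP Hy.
  have : x \in [set v; f v] by rewrite Heq !inE eqxx.
  rewrite !inE => /orP [/eqP Hx|/eqP Hx].
    by rewrite Hx Hy eqxx in Hyf.
  by rewrite Hx -Hy e_irr in Hxy.
exists S; split.
- apply/subsetP => s /imsetP [p pQ ->].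
  apply/imsetP; exists p => //; rewrite inE.
  by move: pQ; rewrite inE => /andP [/andP [_ ->]].
- apply/andP; split; last by apply/forallP => v; rewrite key cards1.
  rewrite /dominating eqEsubset subsetT /=; apply/subsetP => u _.
  apply/bigcupP; exists (f u); first by case: (fP u).
  have : f u \in cnbhd (del_edges e S) u :&: D by rewrite key inE.
  rewrite !inE => /andP [/orP [/eqP ->|H] _]; first by rewrite eqxx.
  by rewrite del_sym H orbT.
- apply: (@leq_trans (#|Q| + #|T|)); first by rewrite leq_add2r leq_imset_card.
  rewrite (card_pairs (fun x y => (y \in D) && e x y && (y != f x))).
  rewrite -sum1_card -big_split /=; apply: leq_sum => v _.
  have -> : cnbhd e v :&: D = f v |: [set d | (d \in D) && e v d && (d != f v)].
    apply/setP => d; rewrite !inE.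
    case: (boolP (d == f v)) => [/eqP ->|Hne] /=.
      case: (fP v) => -> Hf; rewrite andbT.
      case: (boolP (v \in D)) => vD; first by rewrite fD // eqxx.
      by rewrite (Hf vD) orbT.
    rewrite andbT; apply/idP/idP.
      case/andP => /orP [/eqP Hdv|Hvd] dD; last by rewrite dD Hvd.
      by subst d; rewrite fD ?eqxx in Hne.
    by case/andP => ->; rewrite orbC => ->.
  by rewrite cardsU1 !inE eqxx !andbF /= addnC.
Qed.

Lemma avg_csum (D : {set T}) : (0 < #|T|)%N ->
  ((avg_cong e D - 1) * #|T|%:R = (csum e D)%:R - #|T|%:R :> rat)%R.
Proof.
move=> hn; rewrite /avg_cong mulrBl mul1r -mulrA mulVf ?mulr1 //.
by rewrite pnatr_eq0 -lt0n.
Qed.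

Lemma min_or (x y : rat) : Order.min x y = x \/ Order.min x y = y.
Proof. by case: (leP x y) => _; [left|right]. Qed.

End Work.

Theorem mainTheorem4 (T : finType) (e : rel T)
  (e_sym : symmetric e) (e_irr : irreflexive e) (hn : (0 < #|T|)%N) :
  ((PCE e)%:R <= (mac e - 1) * #|T|%:R :> rat)%R /\
  ((mac e - 1) * #|T|%:R <= 2%:R * (PCE e)%:R :> rat)%R.
Proof.
split.
- rewrite /mac.
  apply: (big_ind (fun x => (PCE e)%:R <= (x - 1) * #|T|%:R)%R).
  + have Hdom : dominating e [set: T].
      rewrite /dominating eqEsubset subsetT /=; apply/subsetP => v _.
      by apply/bigcupP; exists v; rewrite ?inE ?eqxx.
    move: Hdom; set D := [set: T] => Hdom.
    case: (@part1 T e e_sym e_irr _ Hdom) => S [SE Hpc Hc].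
    rewrite avg_csum // lerBrDr -natrD ler_nat.
    apply: leq_trans Hc; rewrite leq_add2r /PCE; apply: bigminn_le.
    by rewrite SE /=; apply/existsP; exists D.
  + move=> x y Hx Hy; by case: (min_or x y) => ->.
  + move=> D Hdom.
    case: (@part1 T e e_sym e_irr _ Hdom) => S [SE Hpc Hc].
    rewrite avg_csum // lerBrDr -natrD ler_nat.
    apply: leq_trans Hc; rewrite leq_add2r /PCE; apply: bigminn_le.
    by rewrite SE /=; apply/existsP; exists D.
- have bound : forall (S : {set {set T}}) (D : {set T}), S \subset edges e -> perfect_code (del_edges e S) D ->
      ((mac e - 1) * #|T|%:R <= 2%:R * (#|S|)%:R :> rat)%R.
    move=> S D SE Hpc; case: (@part2 T e _ _ SE Hpc) => Hdom Hc.
    apply: (@le_trans _ _ ((avg_cong e D - 1) * #|T|%:R)%R).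
      apply: ler_wpM2r; first exact: ler0n. rewrite lerD2r.
      exact: (bigmin_le_cond _ (fun D => avg_cong e D) Hdom).
    rewrite avg_csum // lerBlDl -natrM -natrD ler_nat.
    exact: Hc.
  rewrite /PCE.
  apply: (big_ind (fun x : nat => ((mac e - 1) * #|T|%:R <= 2%:R * x%:R :> rat)%R)).
  + apply: (bound _ [set: T] (subxx _)).
    apply/andP; split.
      rewrite /dominating eqEsubset subsetT /=; apply/subsetP => v _.
      by apply/bigcupP; exists v; rewrite ?inE ?eqxx.
    apply/forallP => v; apply/eqP.
    rewrite setIT; suff -> : cnbhd (del_edges e (edges e)) v = [set v] by rewrite cards1.
    apply/setP => u; rewrite !inE.
    case: (boolP (u == v)) => //= Huv; apply/negbTE.
    rewrite /del_edges negb_and negbK orbC; case: (boolP (e v u)) => //= Hvu.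
    all: rewrite ?orbT ?orbF //.
    exact: (@imset_f _ _ (fun p : T * T => [set p.1; p.2]) [pred p : T * T | e p.1 p.2] (v, u) Hvu).
  + move=> x y Hx Hy; rewrite /minn; by case: ifP.
  + move=> S /andP [SE /existsP [D Hpc]]; exact: bound SE Hpc.
Qed.
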